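(* Let $m,k,t,s$ be positive integers with $s<t<\lfloor\frac{m-1}{2}\rfloor$, and define $$c(x)=1+x^{t-s}+x^{s}+x^{t}+x^{t+s}+x^{m-(t-s)}+x^{m-s}+x^{m-t}+x^{m-(t+s)}\in\mathbb{F}_2[x]$$ (i.e. $c(x)=1+\sum_{j\in\{t-s,s,t,t+s\}}(x^j+x^{m-j})$, summing over the four listed values with multiplicity). Then $\gcd(c(x^k),x^m-1)=1$ if and only if $\gcd(m,3tk)=\gcd(m,tk)$ and $\gcd(m,3sk)=\gcd(m,sk)$.
   Context: All polynomials are over $\mathbb{F}_2$. *)

(* Defs.v *)
From HB Require Import structures.
From mathcomp Require Import all_boot all_order all_algebra.
Set Implicit Arguments. Unset Strict Implicit. Unset Printing Implicit Defensive.
Import GRing.Theory.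
Local Open Scope ring_scope.

Definition cpoly (m t s : nat) : {poly 'F_2} :=
  1 + \sum_(j <- [:: (t - s)%N; s; t; (t + s)%N]) ('X^j + 'X^(m - j)).

(* Main.v *)
Require Import Defs.
From HB Require Import structures.
From mathcomp Require Import all_boot all_order all_algebra.
From mathcomp Require Import zify ring.
Import GRing.Theory.
Local Open Scope ring_scope.

Definition Pn (n : nat) : {poly 'F_2} := 'X^n * 'X^n + 'X^n + 1.

Lemma two0 : (2%:R : {poly 'F_2}) = 0.
Proof.
rewrite -polyC_natr; have := pchar_Fp (isT : prime 2).
by move/pcharf0 => ->; rewrite polyC0.
Qed.

Lemma dvd_Xm1 (g a : nat) : (g %| a)%N -> ('X^g - 1 : {poly 'F_2}) %| 'X^a - 1.
Proof.
move=> /dvdnP [q ->]; rewrite mulnC exprM [X in _ %| X]subrX1.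
exact: dvdp_mulIl.
Qed.

Lemma gcd_Xm1 (d : {poly 'F_2}) (a b : nat) : (0 < a)%N ->
  d %| 'X^a - 1 -> d %| 'X^b - 1 -> d %| 'X^(gcdn a b) - 1.
Proof.
move=> a0 ha hb; case: (egcdnP b a0) => km kn E _.
have h1 : d %| 'X^(km * a) - 1 by apply: (dvdp_trans ha); apply: dvd_Xm1; apply: dvdn_mull.
have h2 : d %| 'X^(kn * b) - 1 by apply: (dvdp_trans hb); apply: dvd_Xm1; apply: dvdn_mull.
have -> : ('X^(gcdn a b) - 1 : {poly 'F_2}) =
   ('X^(km * a) - 1) - 'X^(gcdn a b) * ('X^(kn * b) - 1).
  by rewrite E exprD; ring.
by apply: dvdp_sub => //; apply: dvdp_mull.
Qed.

Lemma PnE n : ('X^n - 1) * Pn n = 'X^(3 * n) - 1.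
Proof. have -> : (3 * n = n + n + n)%N by lia. by rewrite !exprD /Pn; ring. Qed.

Lemma Pn_red n : Pn n - ('X^n - 1) * ('X^n + 2%:R) = 1.
Proof.
have -> : Pn n - ('X^n - 1) * ('X^n + 2%:R) = 1 + 2%:R by rewrite /Pn; ring.
by rewrite two0 addr0.
Qed.

Lemma Pn_cop_aux (dd : {poly 'F_2}) n : dd %| Pn n -> dd %| 'X^n - 1 -> dd %= 1.
Proof.
move=> h1 h2; apply: (dvdp_eqp1 _ (eqpxx 1)).
by rewrite -(Pn_red n); apply: dvdp_sub => //; apply: dvdp_mulr.
Qed.

Arguments gcd_Xm1 {d a b}.
Arguments Pn_cop_aux {dd n}.

Lemma size_Pn g : (0 < g)%N -> size (Pn g) = (g + g).+1.
Proof.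
move=> g0; rewrite /Pn -exprD -addrA size_addl.
  by rewrite size_polyXn.
by rewrite size_polyXn -polyC1 size_XnaddC //; lia.
Qed.

Lemma nt (m n : nat) : (0 < m)%N -> gcdn m (3 * n) != gcdn m n ->
  (3 * gcdn m n %| m)%N /\ gcdn (3 * gcdn m n) n = gcdn m n.
Proof.
move=> m0 hne.
set g := gcdn m n.
have g0 : (0 < g)%N by rewrite gcdn_gt0 m0.
set m' := (m %/ g)%N; set n' := (n %/ g)%N.
have em : m = (m' * g)%N by rewrite divnK // dvdn_gcdl.
have en : n = (n' * g)%N by rewrite divnK // dvdn_gcdr.
have cop : gcdn m' n' = 1%N.
  have : (gcdn m' n' * g = 1 * g)%N by rewrite muln_gcdl -em -en mul1n.
  by move/eqP; rewrite eqn_pmul2r // => /eqP.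
have e1 : gcdn m (3 * n) = (gcdn m' 3 * g)%N.
  by rewrite {1}em {1}en mulnA -muln_gcdl Gauss_gcdl // /coprime cop.
have h3 : gcdn m' 3 != 1%N.
  by apply: contra hne; rewrite e1 => /eqP ->; rewrite mul1n.
have d3 : (3 %| m')%N.
  have : (gcdn m' 3 %| 3)%N by apply: dvdn_gcdr.
  case/primeP: (isT : prime 3) => _ H /H /orP [/eqP e|/eqP e].
    by rewrite e in h3.
  by rewrite -e dvdn_gcdl.
split; first by rewrite {1}em dvdn_pmul2r.
have c3 : coprime 3 n'.
  rewrite prime_coprime //; apply/negP => hn.
  have : (3 %| gcdn m' n')%N by rewrite dvdn_gcd d3 hn.
  by rewrite cop.
by rewrite {1}en -muln_gcdl; move: c3; rewrite /coprime => /eqP ->; rewrite mul1n.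
Qed.
Lemma key (n m : nat) : (0 < n)%N -> (0 < m)%N ->
  coprimep (Pn n) ('X^m - 1) = (gcdn m (3 * n) == gcdn m n).
Proof.
move=> n0 m0; apply/idP/idP.
- apply: contraLR => hne.
  case: (@nt m n m0 hne) => h3 hg.
  have g0 : (0 < gcdn m n)%N by rewrite gcdn_gt0 m0.
  move: h3 hg g0; set g := gcdn m n => h3 hg g0.
  have hH1 : Pn g %| 'X^m - 1.
    apply: (@dvdp_trans _ (@GRing.exp _ (polyX _) (3 * g) - 1)); last exact: dvd_Xm1.
    rewrite -PnE; exact: dvdp_mulIr.
  have cH : coprimep (Pn g) ('X^n - 1).
    apply/coprimepP => dd d1 d2. apply: (Pn_cop_aux d1).
    have d3 : dd %| 'X^(3 * g) - 1 by rewrite -PnE; apply: dvdp_mull.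
    have a0 : (0 < 3 * g)%N by lia.
    by have := gcd_Xm1 a0 d3 d2; rewrite hg.
  have hH2 : Pn g %| Pn n.
    rewrite -(Gauss_dvdpr _ cH) PnE.
    apply: (dvdp_trans (dvdp_mulIr ('X^g - 1) (Pn g))); rewrite PnE.
    by apply: dvd_Xm1; rewrite dvdn_pmul2l // /g dvdn_gcdr.
  apply/negP => /coprimepP /(_ _ hH2 hH1).
  rewrite -size_poly_eq1 size_Pn //; lia.
- move/eqP=> E; apply/coprimepP => dd d1 d2; apply: (Pn_cop_aux d1).
  have d3 : dd %| 'X^(3 * n) - 1 by rewrite -PnE; apply: dvdp_mull.
  have a0 : (0 < 3 * n)%N by lia.
  have := gcd_Xm1 a0 d3 d2; rewrite gcdnC E => h.
  by apply: (dvdp_trans h); apply: dvd_Xm1; apply: dvdn_gcdr.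
Qed.

Lemma copX (m : nat) : (0 < m)%N -> coprimep ('X : {poly 'F_2}) ('X^m - 1).
Proof.
move=> m0; apply/Bezout_eq1_coprimepP; exists ('X^(m.-1), -1) => /=.
rewrite -exprSr prednK //; ring.
Qed.

Theorem proposition2 (m k t s : nat) :
  (0 < m)%N -> (0 < k)%N -> (0 < t)%N -> (0 < s)%N ->
  (s < t)%N -> (t < (m - 1)./2)%N ->
  coprimep (cpoly m t s \Po 'X^k) ('X^m - 1) <->
  (gcdn m (3 * t * k) = gcdn m (t * k) /\ gcdn m (3 * s * k) = gcdn m (s * k))%N.
Proof.
move=> m0 k0 t0 s0 st tm.
have cX := @copX m m0.
have hc : coprimep (cpoly m t s \Po 'X^k) ('X^m - 1) =
   coprimep (Pn (s * k)) ('X^m - 1) && coprimep (Pn (t * k)) ('X^m - 1).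
  set Q := ('X^m - 1 : {poly 'F_2}).
  set u : {poly 'F_2} := 'X^k.
  have PnU j : Pn (j * k) = u ^+ j * u ^+ j + u ^+ j + 1 by rewrite /Pn mulnC exprM.
  have cu e : coprimep (u ^+ e) Q by apply: coprimep_expl; apply: coprimep_expl.
  have dQ : Q %| u ^+ m - 1 by rewrite /u -exprM; apply: dvd_Xm1; apply: dvdn_mull.
  rewrite !PnU -coprimepMl.
  rewrite -[coprimep (cpoly m t s \Po u) Q]andTb -(cu (t + s)%N) -coprimepMl.
  have [d ht] : exists d, t = (s + d)%N by exists (t - s)%N; lia.
  have [r hm] : exists r, m = (r + s + s + d)%N by exists (m - t - s)%N; lia.
  have iden : u ^+ (t + s) * (cpoly m t s \Po u) =
    (u ^+ s * u ^+ s + u ^+ s + 1) * (u ^+ t * u ^+ t + u ^+ t + 1) +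
    (u ^+ m - 1) * (u ^+ s * u ^+ s + u ^+ t + u ^+ s + 1).
    rewrite /cpoly !big_cons big_nil !comp_polyD !comp_Xn_poly comp_poly0.
    rewrite (comp_poly_multiplicative u).2.
    have -> : (t - s = d)%N by lia.
    have -> : (m - d = r + s + s)%N by lia.
    have -> : (m - s = r + s + d)%N by lia.
    have -> : (m - t = r + s)%N by lia.
    have -> : (m - (t + s) = r)%N by lia.
    rewrite ht hm !exprD; ring.
  rewrite iden -coprimep_modl modpD (modp_eq0 (dvdp_mulr _ dQ)) addr0.
  by rewrite coprimep_modl.
rewrite hc -!mulnA !key ?muln_gt0 ?s0 ?t0 ?k0 //.
split => [/andP [/eqP a /eqP b] | [-> ->]] //; by rewrite !eqxx.
Qed.
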